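(* Let $R$ be a commutative ring with $1$ and let $H_1,\dots,H_m$ be hyperplanes in $R^n$, where $H_i$ is the zero set of $(\mathbf a^i,\mathbf x)-b_i=a^i_1x_1+\dots+a^i_nx_n-b_i$ with $a^i_j,b_i\in R$. Suppose every vertex of the unit cube $\{0,1\}^n\subseteq R^n$ other than $\mathbf 0$ lies in at least one $H_i$. If $\prod_{i=1}^m b_i\neq 0$, then $m\ge n$. *)

(* Defs.v *)
From mathcomp Require Import all_boot all_order all_algebra.
Set Implicit Arguments. Unset Strict Implicit. Unset Printing Implicit Defensive.
Import GRing.Theory.
Local Open Scope ring_scope.

Definition cube_vertex (R : pzRingType) (n : nat) (v : 'I_n -> bool) : 'rV[R]_n :=
  \row_j (v j)%:R.

Definition on_hyperplane (R : pzRingType) (n : nat) (a : 'rV[R]_n) (b : R)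
  (x : 'rV[R]_n) : Prop :=
  \sum_(j < n) a 0 j * x 0 j - b = 0.

(* Main.v *)
Require Import Defs.
From mathcomp Require Import all_boot all_order all_algebra.
Local Open Scope ring_scope.
Import GRing.Theory.

Section Aux.
Variable R : comNzRingType.

Lemma signsum (n : nat) (T : {set 'I_n}) : T != setT ->
  \sum_(S : {set 'I_n}) (-1) ^+ #|S| * ((T \subset S)%:R : R) = 0.
Proof.
move=> hT.
have [j hj] : exists j, j \notin T.
  apply/existsP; move: hT; apply: contraR; rewrite negb_exists => /forallP H.
  apply/eqP/setP => x; rewrite inE; apply/negPn; exact: H.
rewrite (bigID (fun S : {set 'I_n} => j \in S)) /=.
rewrite (reindex_onto (fun S => j |: S) (fun S => S :\ j)); last first.
  by move=> S hS; rewrite setD1K.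
have E : forall S : {set 'I_n}, (j \in j |: S) && ((j |: S) :\ j == S) = (j \notin S).
  move=> S; rewrite setU11 /=; case: (boolP (j \in S)) => hS.
  - apply/negbTE; apply/eqP => e; move: hS; rewrite -e; by rewrite setD11.
  - by rewrite (setU1K hS) eqxx.
rewrite (eq_bigl _ _ E).
rewrite -big_split /= big1 // => S hS.
rewrite cardsU1 hS add1n exprS.
have -> : (T \subset j |: S) = (T \subset S).
  apply/idP/idP => H; apply/subsetP => x hx.
  - have := subsetP H x hx; rewrite !inE; case/orP => // /eqP ex.
    by move: hj; rewrite -ex hx.
  - by rewrite !inE (subsetP H x hx) orbT.
by rewrite mulN1r mulNr addNr.
Qed.

End Aux.

Theorem theorem6 (R : comNzRingType) (n m : nat)
  (a : 'I_m -> 'rV[R]_n) (b : 'I_m -> R)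
  (cover : forall v : 'I_n -> bool, (exists j, v j) ->
     exists i : 'I_m, on_hyperplane (a i) (b i) (cube_vertex R v))
  (hb : \prod_(i < m) b i != 0) :
  (n <= m)%N.
Proof.
rewrite leqNgt; apply/negP => hmn.
have j0 : 'I_n by exists m.
pose f (S : {set 'I_n}) := \prod_(i < m) (b i - \sum_(j < n) a i 0 j * (j \in S)%:R).
have E1 : \sum_(S : {set 'I_n}) (-1) ^+ #|S| * f S = \prod_(i < m) b i.
  rewrite (bigD1 set0) //= big1 ?addr0.
    rewrite cards0 expr0 mul1r /f; apply: eq_bigr => i _.
    by rewrite big1 ?subr0 // => j _; rewrite inE mulr0.
  move=> S /set0Pn [j hj].
  have [i hi] := cover (fun j => j \in S) (ex_intro _ j hj).
  rewrite /f (bigD1 i) //=.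
  have -> : b i - \sum_(j < n) a i 0 j * (j \in S)%:R = 0.
    have hs : \sum_(j < n) a i 0 j * cube_vertex R (fun j => j \in S) 0 j
            = \sum_(j < n) a i 0 j * (j \in S)%:R.
      by apply: eq_bigr => k _; rewrite /cube_vertex mxE.
    move/eqP: hi; rewrite subr_eq0 hs => /eqP ->; by rewrite subrr.
  by rewrite mul0r mulr0.
pose c (i : 'I_m) (o : option 'I_n) := if o is Some j then - a i 0 j else b i.
pose oin (o : option 'I_n) (S : {set 'I_n}) := if o is Some j then j \in S else true.
pose T (h : {ffun 'I_m -> option 'I_n}) := [set j | [exists i, h i == Some j]].
have Ef : forall S, f S = \sum_(h : {ffun 'I_m -> option 'I_n})
     (\prod_(i < m) c i (h i)) * ((T h \subset S)%:R).
  move=> S.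
  have -> : f S = \prod_(i < m) \sum_(o : option 'I_n) c i o * (oin o S)%:R.
    apply: eq_bigr => i _.
    rewrite (bigD1 None) //= mulr1.
    rewrite (reindex_onto (fun j => Some j) (odflt j0)); last by case.
    rewrite /= (eq_bigl (fun _ => true)) //.
    rewrite -sumrN; congr (_ + _).
    by apply: eq_big => [k|k _]; rewrite ?eqxx ?mulNr.
  rewrite (bigA_distr_bigA (fun i o => c i o * (oin o S)%:R)) /=; apply: eq_bigr => h _.
  rewrite big_split /=; congr (_ * _).
  case: (boolP (T h \subset S)) => hT.
    apply: big1 => i _; case e: (h i) => [j|] //=.
    have : j \in T h by rewrite inE; apply/existsP; exists i; rewrite e.
    by move/(subsetP hT) => ->.
  have [j hjT hjS] : exists2 j, j \in T h & j \notin S.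
    by apply/exists_inP; move: hT; apply: contraR; rewrite negb_exists_in => /forall_inP H; apply/subsetP => x hx; apply/negPn; apply: H.
  move: hjT; rewrite inE => /existsP [i /eqP hi].
  by rewrite (bigD1 i) //= hi /= (negbTE hjS) mul0r.
have E2 : \sum_(S : {set 'I_n}) (-1) ^+ #|S| * f S = 0.
  under eq_bigr => S _ do rewrite Ef mulr_sumr.
  rewrite exchange_big /= big1 // => h _.
  under eq_bigr => S _ do rewrite mulrCA.
  rewrite -mulr_sumr signsum ?mulr0 //.
  apply/negP => /eqP hT.
  have : (#|T h| <= m)%N.
    have -> : T h = [set odflt j0 (h i) | i in [set: 'I_m] :&: [set i | h i != None]].
      apply/setP => x; rewrite inE; apply/existsP/imsetP.
        by case=> i /eqP e; exists i; rewrite ?inE ?e //.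
      by case=> i; rewrite !inE; case e: (h i) => [k|] //= _ ->; exists i; rewrite e.
    apply: leq_trans (leq_imset_card _ _) _.
    by rewrite (leq_trans (subset_leq_card (subsetIl _ _))) // cardsT card_ord.
  by rewrite hT cardsT card_ord leqNgt hmn.
by move: hb; rewrite -E1 E2 eqxx.
Qed.
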